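(* Let $n\ge 1$, $p\in\{0,\dots,n\}$, $\mathcal{X}=\{x\in\{0,1\}^n:\sum_{i=1}^n x_i=p\}$ (the minimum selection problem), $\hat c\in\mathbb{R}^n_{\ge0}$, and fix $\lambda\in[0,1]$. Let $\mathcal{U}=\prod_{i=1}^n[(1-\lambda)\hat c_i,(1+\lambda)\hat c_i]$. Then a nominal solution $\hat x$ (a minimizer of $\hat c^tx$ over $\mathcal{X}$) is an optimal solution of the min-max regret selection problem \[ \min_{x\in\mathcal{X}}\ \max_{c\in\mathcal{U}}\Big(c^tx-\min_{y\in\mathcal{X}}c^ty\Big). \] *)

(* Defs.v *)
From HB Require Import structures.
From mathcomp Require Import all_boot all_order all_algebra.
From mathcomp Require Import all_classical all_reals.
Unset Strict Implicit. Unset Printing Implicit Defensive.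
Import Order.TTheory GRing.Theory Num.Theory.
Local Open Scope classical_set_scope.
Local Open Scope ring_scope.

Definition selection (n p : nat) : set {ffun 'I_n -> bool} :=
  [set x : {ffun 'I_n -> bool} | (\sum_(i < n) nat_of_bool (x i))%N = p].

Definition cost (R : realType) (n : nat) (c : 'I_n -> R) (x : {ffun 'I_n -> bool}) : R :=
  \sum_(i < n) c i * (x i)%:R.

Definition unc_set (R : realType) (n : nat) (lam : R) (ch : 'I_n -> R) : set ('I_n -> R) :=
  [set c | forall i, (1 - lam) * ch i <= c i /\ c i <= (1 + lam) * ch i].

(* min_{y in X} c^t y (a finite nonempty set when p <= n: inf = min). *)
Definition opt_value (R : realType) (n p : nat) (c : 'I_n -> R) : R :=
  inf [set cost R n c y | y in selection n p].

(* max_{c in U} (c^t x - min_{y in X} c^t y) (the max is attained: sup = max). *)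
Definition max_regret (R : realType) (n p : nat) (lam : R) (ch : 'I_n -> R)
    (x : {ffun 'I_n -> bool}) : R :=
  sup [set cost R n c x - opt_value R n p c | c in unc_set R n lam ch].

Definition nominal (R : realType) (n p : nat) (ch : 'I_n -> R) (xh : {ffun 'I_n -> bool}) :=
  selection n p xh /\ forall y, selection n p y -> cost R n ch xh <= cost R n ch y.

(* Main.v *)
Require Import Defs.
From HB Require Import structures.
From mathcomp Require Import all_boot all_order all_algebra.
From mathcomp Require Import all_classical all_reals.
From mathcomp Require Import perm lra zify.
Import Order.TTheory GRing.Theory Num.Theory.
Local Open Scope classical_set_scope.
Local Open Scope ring_scope.

Definition sw n (x : {ffun 'I_n -> bool}) (i j : 'I_n) : {ffun 'I_n -> bool} :=
  [ffun k => x (tperm i j k)].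

Arguments sw {n}.

Lemma cost_sw {R : realType} {n} (c : 'I_n -> R) x i j :
  cost R n c (sw x i j) = \sum_(k < n) c (tperm i j k) * (x k)%:R.
Proof.
rewrite /cost (reindex_inj (@perm_inj _ (tperm i j))) /=.
by apply: eq_bigr => k _; rewrite /sw ffunE tpermK.
Qed.

Lemma sel_sw {n p} x (i j : 'I_n) : selection n p x -> selection n p (sw x i j).
Proof.
rewrite /selection /= => <-.
rewrite (reindex_inj (@perm_inj _ (tperm i j))) /=.
by apply: eq_bigr => k _; rewrite /sw ffunE tpermK.
Qed.

Lemma cost_ge0 {R : realType} {n} (c : 'I_n -> R) x :
  (forall k, 0 <= c k) -> 0 <= cost R n c x.
Proof. by move=> h; apply: sumr_ge0 => k _; apply: mulr_ge0. Qed.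

Lemma opt_le {R : realType} {n p} (c : 'I_n -> R) y :
  (forall k, 0 <= c k) -> selection n p y -> opt_value R n p c <= cost R n c y.
Proof.
move=> h sy; apply: ge_inf; last by exists y.
by exists 0 => _ [z _ <-]; apply: cost_ge0.
Qed.

Lemma opt_ge {R : realType} {n p} (c : 'I_n -> R) y m :
  selection n p y -> (forall z, selection n p z -> m <= cost R n c z) ->
  m <= opt_value R n p c.
Proof.
move=> sy h; apply: lb_le_inf; first by exists (cost R n c y), y.
by move=> _ [z sz <-]; apply: h.
Qed.

Lemma unc_ge0 {R : realType} {n lam} {ch c : 'I_n -> R} :
  (forall k, 0 <= ch k) -> lam <= 1 -> unc_set R n lam ch c -> forall k, 0 <= c k.
Proof.
move=> h0 hl Uc k; have [h1 _] := Uc k; apply: le_trans h1.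
by apply: mulr_ge0; [rewrite subr_ge0|].
Qed.

Lemma ch_unc {R : realType} {n lam} (ch : 'I_n -> R) :
  (forall k, 0 <= ch k) -> 0 <= lam -> unc_set R n lam ch ch.
Proof.
move=> h0 hl k; have := h0 k; split; nra.
Qed.

Lemma regret_le_max {R : realType} {n p lam} {ch c : 'I_n -> R} x :
  (forall k, 0 <= ch k) -> 0 <= lam -> lam <= 1 -> selection n p x ->
  unc_set R n lam ch c ->
  cost R n c x - opt_value R n p c <= max_regret R n p lam ch x.
Proof.
move=> h0 hl0 hl1 sx Uc; apply: ub_le_sup; last by exists c.
exists (\sum_(k < n) (1 + lam) * ch k) => _ [c' Uc' <-].
have c'0 := unc_ge0 h0 hl1 Uc'.
have o0 : 0 <= opt_value R n p c'.
  by apply: (opt_ge _ x) => // z _; apply: cost_ge0.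
apply: le_trans (_ : cost R n c' x <= _); first by rewrite lerBlDr lerDl.
apply: ler_sum => k _; have [_ h] := Uc' k; have := c'0 k.
have := h0 k; case: (x k) => /= ? ?; rewrite ?mulr1 ?mulr0; nra.
Qed.

Lemma swap_le {R : realType} {n p lam} (ch : 'I_n -> R) x i j :
  (forall k, 0 <= ch k) -> 0 <= lam -> lam <= 1 -> selection n p x ->
  x i = false -> x j = true -> ch i <= ch j ->
  max_regret R n p lam ch (sw x i j) <= max_regret R n p lam ch x.
Proof.
move=> h0 hl0 hl1 sx xi xj hij.
have nij : i != j by apply/eqP => E; rewrite E xj in xi.
have sx' := sel_sw x i j sx.
apply: ge_sup; first by exists (cost R n ch (sw x i j) - opt_value R n p ch), ch;
  last by []; apply: ch_unc.
move=> _ [c Uc <-].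
pose c' k := if k == j then (1 + lam) * ch j else if k == i then (1 - lam) * ch i else c k.
have Uc' : unc_set R n lam ch c'.
  move=> k; rewrite /c'; case: eqP => [->|_]; first by have := h0 j; split; nra.
  case: eqP => [->|_]; first by have := h0 i; split; nra.
  exact: Uc.
apply: le_trans (regret_le_max x h0 hl0 hl1 sx Uc').
suff : opt_value R n p c' + (cost R n c (sw x i j) - cost R n c' x) <= opt_value R n p c by lra.
apply: (opt_ge _ (sw x i j)) => // z sz.
have c0 := unc_ge0 h0 hl1 Uc.
have c'0 := unc_ge0 h0 hl1 Uc'.
apply: le_trans (_ : cost R n c' (sw z i j) + (cost R n c (sw x i j) - cost R n c' x) <= _).
  by rewrite lerD2r; apply: opt_le => //; apply: sel_sw.
have -> : cost R n c z = cost R n (fun k => c (tperm i j k)) (sw z i j).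
  by rewrite cost_sw; apply: eq_bigr => k _; rewrite tpermK.
suff : cost R n c (sw x i j) - cost R n (fun k => c (tperm i j k)) (sw z i j) <=
  cost R n c' x - cost R n c' (sw z i j) by lra.
rewrite cost_sw /cost -!sumrB; apply: ler_sum => k _.
rewrite /c'; case: (eqVneq k j) => [->|nkj].
  rewrite tpermR xj /=; have [_ hu] := Uc i; have := h0 i; have := h0 j.
  case: (sw z i j j) => /= ? ?; rewrite ?mulr1 ?mulr0; nra.
case: (eqVneq k i) => [->|nki].
  rewrite tpermL xi /=; have [hl _] := Uc j; have := h0 i; have := h0 j.
  case: (sw z i j i) => /= ? ?; rewrite ?mulr1 ?mulr0; nra.
by rewrite tpermD // eq_sym.
Qed.

Lemma lt_sum_nat n (f g : 'I_n -> nat) j :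
  (forall k, f k <= g k)%N -> (f j < g j)%N -> (\sum_(k < n) f k < \sum_(k < n) g k)%N.
Proof.
move=> h hj; rewrite (bigD1 j) //= [X in (_ < X)%N](bigD1 j) //=.
have : (\sum_(k < n | k != j) f k <= \sum_(k < n | k != j) g k)%N by apply: leq_sum => k _; apply: h.
move=> H; rewrite -addSn; exact: leq_add hj H.
Qed.

Lemma sub_eq {n p} (x y : {ffun 'I_n -> bool}) :
  selection n p x -> selection n p y -> (forall k, y k -> x k) -> x = y.
Proof.
move=> sx sy h; apply/ffunP => k.
case hy: (y k); first by apply: h; rewrite hy.
case hx: (x k) => //; exfalso.
have : (\sum_(i < n) nat_of_bool (y i) < \sum_(i < n) nat_of_bool (x i))%N.
  apply: (@lt_sum_nat n (fun i => nat_of_bool (y i)) (fun i => nat_of_bool (x i)) k); last by rewrite hx hy.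
  by move=> i; case hyi: (y i) => //=; rewrite h.
by rewrite sx sy ltnn.
Qed.

Theorem theorem3 (R : realType) (n p : nat) (ch : 'I_n -> R) (lam : R)
    (xh : {ffun 'I_n -> bool}) :
  (1 <= n)%N -> (p <= n)%N ->
  (forall i, 0 <= ch i) -> 0 <= lam -> lam <= 1 ->
  nominal R n p ch xh ->
  forall x, selection n p x -> max_regret R n p lam ch xh <= max_regret R n p lam ch x.
Proof.
move=> _ _ h0 hl0 hl1 [sxh nom] x sx.
move: {2}(\sum_(k < n) nat_of_bool (x k && ~~ xh k))%N (leqnn (\sum_(k < n) nat_of_bool (x k && ~~ xh k))) => m.
elim: m x sx => [|m IH] x sx hd.
all: case: (pickP (fun j => x j && ~~ xh j)) => [j /andP[xj nxhj] | none].
- have : (0 < \sum_(k < n) nat_of_bool (x k && ~~ xh k))%N.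
    by rewrite (bigD1 j) //= xj nxhj.
  by rewrite leqNgt in hd; rewrite (negbTE hd).
- have -> : xh = x; last by [].
  apply: (sub_eq (p:=p)) => // k xk; have := none k; rewrite /= xk /=; by case: (xh k).
- case: (pickP (fun i => xh i && ~~ x i)) => [i /andP[xhi nxi] | none2]; last first.
    have E : x = xh.
      apply: (sub_eq (p:=p)) => // k xk; have := none2 k; rewrite /= xk /=; by case: (x k).
    by rewrite -E xj in nxhj.
  have xi : x i = false by apply: negbTE.
  have nij : i != j by apply/eqP => E; rewrite E xj in nxi.
  have hij : ch i <= ch j.
    have := nom _ (sel_sw xh i j sxh); rewrite cost_sw /cost.
    rewrite (bigD1 i) //= [X in _ <= X](bigD1 i) //= tpermL xhi /= !mulr1.
    move=> H; rewrite -(lerD2r (\sum_(k < n | k != i) ch k * (xh k)%:R)).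
    apply: (le_trans H); rewrite lerD2l; apply: ler_sum => k nki.
    case: (eqVneq k j) => [->|nkj]; first by rewrite (negbTE nxhj) !mulr0.
    by rewrite tpermD // eq_sym.
  apply: le_trans (swap_le ch x i j h0 hl0 hl1 sx xi xj hij).
  apply: IH; first by apply: sel_sw.
  rewrite -ltnS; apply: leq_trans hd; apply: (@lt_sum_nat n (fun k => nat_of_bool (sw x i j k && ~~ xh k)) (fun k => nat_of_bool (x k && ~~ xh k)) j).
    move=> k; rewrite /sw ffunE.
    case: (eqVneq k j) => [->|nkj]; first by rewrite tpermR xi.
    case: (eqVneq k i) => [->|nki]; first by rewrite tpermL xhi /= andbF.
    by rewrite tpermD // eq_sym.
  by rewrite /sw ffunE tpermR xi xj nxhj.
- have -> : xh = x; last by [].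
  apply: (sub_eq (p:=p)) => // k xk; have := none k; rewrite /= xk /=; by case: (xh k).
Qed.
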